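(* Let $\Phi:\mathbb{R}\to\mathbb{R}$ be twice continuously differentiable on $[-1,1]$ with $\Phi'(-1)=-1$, $\Phi'(1)=1$, $\Phi''(-1)<1$ and $\Phi''(1)<1$. Then $\Phi''$ has a local maximiser in $(-1,1)$ (i.e. $\Phi'$ has at least one convex-concave turning point in $(-1,1)$). Moreover, if $\Phi'$ has no further turning point in $(-1,1)$, i.e. there is $w_*\in(-1,1)$ such that $\Phi''$ is nondecreasing on $[-1,w_*]$ and nonincreasing on $[w_*,1]$, and if $\Phi(-1)=\Phi(1)$, then $g_\Phi(w)>0$ for all $w\in(-1,1)$.
   Context: $g_\Phi(w):=\int_{-1}^{w}\big(v-\Phi'(v)\big)\,dv=\Phi(-1)-\Phi(w)+\tfrac12w^2-\tfrac12$. *)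

(* Defs.v *)
From Stdlib Require Import Reals Lra.
Open Scope R_scope.

Definition is_deriv_on (f f' : R -> R) (a b : R) : Prop :=
  forall x, a <= x <= b ->
  forall eps, 0 < eps -> exists delta, 0 < delta /\
    forall y, a <= y <= b -> y <> x -> Rabs (y - x) < delta ->
      Rabs ((f y - f x) / (y - x) - f' x) < eps.

Definition cont_on (f : R -> R) (a b : R) : Prop :=
  forall x, a <= x <= b ->
  forall eps, 0 < eps -> exists delta, 0 < delta /\
    forall y, a <= y <= b -> Rabs (y - x) < delta -> Rabs (f y - f x) < eps.

Definition C2_on (Phi d1 d2 : R -> R) (a b : R) : Prop :=
  is_deriv_on Phi d1 a b /\ is_deriv_on d1 d2 a b /\ cont_on d2 a b.

(* g_Phi(w) = int_{-1}^w (v - Phi'(v)) dv = Phi(-1) - Phi(w) + w^2/2 - 1/2 *)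
Definition g_Phi (Phi : R -> R) (w : R) : R :=
  Phi (-1) - Phi w + w ^ 2 / 2 - 1 / 2.

Definition local_max_at (h : R -> R) (w0 : R) : Prop :=
  exists delta, 0 < delta /\
    forall y, -1 <= y <= 1 -> Rabs (y - w0) < delta -> h y <= h w0.

(* Main.v *)
Require Import Defs.
From Stdlib Require Import Reals Lra.
Open Scope R_scope.

Definition clamp (x : R) : R := Rmax (-1) (Rmin 1 x).

Lemma clamp_id x : -1 <= x <= 1 -> clamp x = x.
Proof. intros. unfold clamp, Rmax, Rmin. repeat destruct Rle_dec; lra. Qed.

Lemma clamp_in x : -1 <= clamp x <= 1.
Proof. unfold clamp, Rmax, Rmin. repeat destruct Rle_dec; lra. Qed.

Lemma clamp_lip x y : Rabs (clamp y - clamp x) <= Rabs (y - x).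
Proof.
  unfold clamp, Rmax, Rmin. repeat destruct Rle_dec;
  unfold Rabs; repeat destruct Rcase_abs; lra.
Qed.

Lemma deriv_cont f f' a b : is_deriv_on f f' a b -> cont_on f a b.
Proof.
  intros H x Hx eps He.
  destruct (H x Hx 1 Rlt_0_1) as [d [Hd Hy]].
  set (K := Rabs (f' x) + 1).
  assert (HK : 0 < K) by (unfold K; pose proof (Rabs_pos (f' x)); lra).
  exists (Rmin d (eps / K)). split.
  { apply Rmin_pos; auto. apply Rdiv_lt_0_compat; auto. }
  intros y Hyab Hyx.
  destruct (Req_dec y x) as [->|Hne].
  { rewrite Rminus_diag, Rabs_R0. lra. }
  assert (Hyd : Rabs (y - x) < d) by (eapply Rlt_le_trans; [apply Hyx| apply Rmin_l]).
  assert (Hye : Rabs (y - x) < eps / K) by (eapply Rlt_le_trans; [apply Hyx| apply Rmin_r]).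
  specialize (Hy y Hyab Hne Hyd).
  set (q := (f y - f x) / (y - x)) in *.
  assert (Hq : Rabs q < K).
  { unfold K. pose proof (Rabs_triang_inv q (f' x)). lra. }
  assert (E : f y - f x = q * (y - x)) by (unfold q; field; lra).
  rewrite E, Rabs_mult.
  assert (Hp : 0 < Rabs (y - x)) by (apply Rabs_pos_lt; lra).
  apply Rlt_le_trans with (K * Rabs (y - x)).
  { apply Rmult_lt_compat_r; auto. }
  apply Rle_trans with (K * (eps / K)).
  { apply Rmult_le_compat_l; lra. }
  right; field; lra.
Qed.

Lemma cont_clamp f : cont_on f (-1) 1 -> forall x, -1 <= x <= 1 ->
  continuity_pt (fun y => f (clamp y)) x.
Proof.
  intros H x Hx. unfold continuity_pt, continue_in, limit1_in, limit_in.
  intros eps He. destruct (H x Hx eps He) as [d [Hd Hy]].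
  exists d. split; auto. intros y [_ Hyx]. simpl in *. unfold R_dist in *.
  rewrite (clamp_id x Hx).
  apply Hy. apply clamp_in.
  eapply Rle_lt_trans; [|apply Hyx].
  rewrite <- (clamp_id x Hx) at 1. apply clamp_lip.
Qed.

Lemma deriv_clamp f f' c : is_deriv_on f f' (-1) 1 -> -1 < c < 1 ->
  derivable_pt_lim (fun y => f (clamp y)) c (f' c).
Proof.
  intros H Hc eps He.
  destruct (H c ltac:(lra) eps He) as [d [Hd Hy]].
  assert (Hpos : 0 < Rmin d (Rmin (c + 1) (1 - c))).
  { repeat apply Rmin_pos; lra. }
  exists (mkposreal _ Hpos). intros h Hh0 Hh. simpl in Hh.
  pose proof (Rmin_l d (Rmin (c+1) (1-c))).
  pose proof (Rmin_r d (Rmin (c+1) (1-c))).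
  pose proof (Rmin_l (c+1) (1-c)). pose proof (Rmin_r (c+1) (1-c)).
  assert (Hh' : -(c+1) < h < 1 - c).
  { unfold Rabs in Hh; destruct Rcase_abs in Hh; lra. }
  rewrite (clamp_id c ltac:(lra)), (clamp_id (c+h) ltac:(lra)).
  specialize (Hy (c + h) ltac:(lra) ltac:(lra)).
  replace (c + h - c) with h in Hy by ring. apply Hy. lra.
Qed.

Lemma MVT_open f f' x y : is_deriv_on f f' (-1) 1 -> -1 <= x -> x < y -> y <= 1 ->
  exists c, x < c < y /\ f y - f x = f' c * (y - x).
Proof.
  intros H Hx Hxy Hy.
  set (F := fun y => f (clamp y)).
  assert (pr1 : forall c, x < c < y -> derivable_pt F c).
  { intros c Hc. exists (f' c). apply deriv_clamp; auto; lra. }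
  assert (pr2 : forall c, x < c < y -> derivable_pt id c).
  { intros c Hc. exists 1. apply derivable_pt_lim_id. }
  assert (Hcf : forall c, x <= c <= y -> continuity_pt F c).
  { intros c Hc. apply cont_clamp; [apply (deriv_cont _ _ _ _ H)|lra]. }
  assert (Hci : forall c, x <= c <= y -> continuity_pt id c).
  { intros. apply derivable_continuous_pt. apply derivable_pt_id. }
  destruct (MVT F id x y
     (fun c P => exist _ (f' c) (deriv_clamp f f' c H ltac:(lra)))
     (fun c P => exist _ 1 (derivable_pt_lim_id c)) Hxy Hcf Hci) as [c [P E]].
  simpl in E. exists c. split; auto.
  unfold F, id in E. rewrite (clamp_id x ltac:(lra)), (clamp_id y ltac:(lra)) in E.
  lra.
Qed.

Lemma deriv_quad f f' a b al be ga : is_deriv_on f f' a b ->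
  is_deriv_on (fun x => al * x^2 + be * x + ga - f x)
              (fun x => 2 * al * x + be - f' x) a b.
Proof.
  intros H x Hx eps He.
  destruct (H x Hx (eps/2) ltac:(lra)) as [d [Hd Hy]].
  set (K := Rabs al + 1).
  assert (HK : 0 < K) by (unfold K; pose proof (Rabs_pos al); lra).
  exists (Rmin d (eps / 2 / K)). split.
  { apply Rmin_pos; auto. apply Rdiv_lt_0_compat; lra. }
  intros y Hyab Hne Hyx.
  assert (Hyd : Rabs (y - x) < d) by (eapply Rlt_le_trans; [apply Hyx| apply Rmin_l]).
  assert (Hye : Rabs (y - x) < eps / 2 / K) by (eapply Rlt_le_trans; [apply Hyx| apply Rmin_r]).
  specialize (Hy y Hyab Hne Hyd).
  assert (Hyx0 : y - x <> 0) by lra.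
  replace ((al * y ^ 2 + be * y + ga - f y - (al * x ^ 2 + be * x + ga - f x)) / (y - x) -
     (2 * al * x + be - f' x))
    with (al * (y - x) - ((f y - f x) / (y - x) - f' x)) by (field; auto).
  unfold Rminus at 1. eapply Rle_lt_trans; [apply Rabs_triang|]. rewrite Rabs_Ropp, Rabs_mult.
  assert (al_b : Rabs al * Rabs (y - x) <= eps / 2).
  { apply Rle_trans with (K * (eps / 2 / K)).
    - apply Rmult_le_compat; try apply Rabs_pos; [unfold K; lra | left; exact Hye].
    - right; field; lra. }
  lra.
Qed.

Theorem mainTheorem4 (Phi d1 d2 : R -> R) :
  C2_on Phi d1 d2 (-1) 1 ->
  d1 (-1) = -1 -> d1 1 = 1 -> d2 (-1) < 1 -> d2 1 < 1 ->
  (exists w0, -1 < w0 < 1 /\ local_max_at d2 w0) /\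
  ((exists ws, -1 < ws < 1 /\
      (forall x y, -1 <= x -> x <= y -> y <= ws -> d2 x <= d2 y) /\
      (forall x y, ws <= x -> x <= y -> y <= 1 -> d2 y <= d2 x)) ->
   Phi (-1) = Phi 1 ->
   forall w, -1 < w < 1 -> 0 < g_Phi Phi w).
Proof.
  intros [HP [H1 H2]] Hm1 Hp1 Hd2m Hd2p.
  split.
  - destruct (MVT_open d1 d2 (-1) 1 H1 ltac:(lra) ltac:(lra) ltac:(lra)) as [c [Hc Ec]].
    assert (Hc1 : d2 c = 1) by lra.
    destruct (continuity_ab_maj (fun y => d2 (clamp y)) (-1) 1 ltac:(lra)
                (cont_clamp d2 H2)) as [M [HM HMin]].
    rewrite (clamp_id M HMin) in HM.
    assert (HcM : 1 <= d2 M) by (rewrite <- Hc1; rewrite <- (clamp_id c) by lra; apply HM; lra).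
    assert (M <> -1) by (intro; subst; lra).
    assert (M <> 1) by (intro; subst; lra).
    exists M. split; [lra|]. exists 1. split; [lra|].
    intros y Hy _. rewrite <- (clamp_id y Hy). apply HM; auto.
  - intros [ws [Hws [Hinc Hdec]]] HPhi w Hw.
    assert (Sconv : forall x y z, -1 <= x -> x <= y -> y <= z -> z <= 1 ->
               1 <= d2 x -> 1 <= d2 z -> 1 <= d2 y).
    { intros x y z Hx Hxy Hyz Hz Hdx Hdz.
      destruct (Rle_dec y ws).
      - pose proof (Hinc x y Hx Hxy r). lra.
      - pose proof (Hdec y z ltac:(lra) Hyz Hz). lra. }
    pose proof (deriv_quad d1 d2 (-1) 1 0 1 0 H1) as Hh.
    set (h := fun x : R => 0 * x ^ 2 + 1 * x + 0 - d1 x) in Hh.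
    pose proof (deriv_quad Phi d1 (-1) 1 (1/2) 0 (Phi (-1) - 1/2) HP) as Hg.
    set (g := fun x : R => 1/2 * x ^ 2 + 0 * x + (Phi (-1) - 1/2) - Phi x) in Hg.
    assert (gE : forall x, g x = g_Phi Phi x) by (intros; unfold g, g_Phi; field).
    assert (hm : h (-1) = 0) by (unfold h; rewrite Hm1; ring).
    assert (hp : h 1 = 0) by (unfold h; rewrite Hp1; ring).
    assert (P4 : forall x y, -1 < x -> x < y -> y < 1 -> h x <= 0 -> h y <= 0).
    { intros x y Hx Hxy Hy Hhx.
      destruct (Rle_dec (h y) 0) as [|Hn]; auto. exfalso.
      destruct (MVT_open h _ (-1) x Hh ltac:(lra) ltac:(lra) ltac:(lra)) as [c0 [Hc0 E0]].
      destruct (MVT_open h _ x y Hh ltac:(lra) ltac:(lra) ltac:(lra)) as [c1 [Hc1 E1]].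
      destruct (MVT_open h _ y 1 Hh ltac:(lra) ltac:(lra) ltac:(lra)) as [c2 [Hc2 E2]].
      assert (A0 : 1 <= d2 c0).
      { destruct (Rle_dec 1 (d2 c0)); auto.
        assert (0 < (2 * 0 * c0 + 1 - d2 c0) * (x - -1)) by (apply Rmult_lt_0_compat; lra).
        lra. }
      assert (A2 : 1 <= d2 c2).
      { destruct (Rle_dec 1 (d2 c2)); auto.
        assert (0 < (2 * 0 * c2 + 1 - d2 c2) * (1 - y)) by (apply Rmult_lt_0_compat; lra).
        lra. }
      assert (A1 : d2 c1 < 1).
      { destruct (Rlt_dec (d2 c1) 1); auto.
        assert (0 <= (d2 c1 - 1) * (y - x)) by (apply Rmult_le_pos; lra).
        lra. }
      pose proof (Sconv c0 c1 c2 ltac:(lra) ltac:(lra) ltac:(lra) ltac:(lra) A0 A2). lra. }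
    rewrite <- gE.
    assert (g1 : g 1 = 0) by (rewrite gE; unfold g_Phi; rewrite HPhi; field).
    destruct (Rle_dec (h w) 0) as [Hhw|Hhw].
    +
      destruct (H2 1 ltac:(lra) (1 - d2 1) ltac:(lra)) as [d [Hd Hdd]].
      assert (P2 : forall x, 1 - d <= x -> x < 1 -> -1 < x -> h x < 0).
      { intros x Hx Hx1 Hxm.
        destruct (MVT_open h _ x 1 Hh ltac:(lra) ltac:(lra) ltac:(lra)) as [c [Hc E]].
        assert (d2 c < 1).
        { assert (Rabs (c - 1) < d) by (unfold Rabs; destruct Rcase_abs; lra).
          specialize (Hdd c ltac:(lra) H). unfold Rabs in Hdd; destruct Rcase_abs in Hdd; lra. }
        assert (0 < (2 * 0 * c + 1 - d2 c) * (1 - x)) by (apply Rmult_lt_0_compat; lra).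
        lra. }
      destruct (Rle_dec (1 - d) w).
      * destruct (MVT_open g _ w 1 Hg ltac:(lra) ltac:(lra) ltac:(lra)) as [c [Hc E]].
        assert (h c < 0) by (apply P2; lra).
        unfold h in H. 
        assert ((2 * (1/2) * c + 0 - d1 c) * (1 - w) < 0).
        { apply Rmult_neg_pos; [lra|lra]. }
        lra.
      * pose (b := 1 - d). assert (Hb : b = 1 - d) by reflexivity. clearbody b.
        destruct (MVT_open g _ b 1 Hg ltac:(lra) ltac:(lra) ltac:(lra)) as [c [Hc E]].
        destruct (MVT_open g _ w b Hg ltac:(lra) ltac:(lra) ltac:(lra)) as [c' [Hc' E']].
        assert (h c < 0) by (apply P2; lra).
        assert (h c' <= 0) by (apply (P4 w c'); lra).
        unfold h in *.
        assert ((2 * (1/2) * c + 0 - d1 c) * (1 - b) < 0).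
        { apply Rmult_neg_pos; [lra|lra]. }
        assert ((2 * (1/2) * c' + 0 - d1 c') * (b - w) <= 0).
        { assert (0 <= -(2 * (1/2) * c' + 0 - d1 c') * (b - w)) by (apply Rmult_le_pos; lra). lra. }
        lra.
    + destruct (MVT_open g _ (-1) w Hg ltac:(lra) ltac:(lra) ltac:(lra)) as [c [Hc E]].
      assert (h c > 0).
      { destruct (Rle_dec (h c) 0) as [Hc0|]; [|lra].
        exfalso. apply Hhw. apply (P4 c w); lra. }
      assert (g (-1) = 0) by (unfold g; field).
      unfold h in *.
      assert (0 < (2 * (1/2) * c + 0 - d1 c) * (w - -1)) by (apply Rmult_lt_0_compat; lra).
      lra.
Qed.
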